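(* For all real numbers $x,y$ with $|x|+|y|\le 1$, \[ \left|1+\frac x2-\sqrt{1+x+y}\right| \le 1-\frac{|x|}2-\sqrt{1-|x|-|y|}. \] *)

(* Defs.v *)
From Stdlib Require Export Reals.

(* Main.v *)
Require Import Defs.
From Stdlib Require Import Reals Lra Psatz.
Open Scope R_scope.

Theorem lemma8 (x y : R) (h : Rabs x + Rabs y <= 1) :
  Rabs (1 + x / 2 - sqrt (1 + x + y)) <= 1 - Rabs x / 2 - sqrt (1 - Rabs x - Rabs y).
Proof.
  set (a := Rabs x) in *. set (b := Rabs y) in *.
  assert (Ha : 0 <= a) by apply Rabs_pos.
  assert (Hb : 0 <= b) by apply Rabs_pos.
  assert (Hxa : -a <= x <= a) by (split; [pose proof (Rabs_Ropp x) as H1; pose proof (Rle_abs (-x)); unfold a; lra | apply Rle_abs]).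
  assert (Hyb : -b <= y <= b) by (split; [pose proof (Rabs_Ropp y) as H1; pose proof (Rle_abs (-y)); unfold b; lra | apply Rle_abs]).
  assert (Ex : (0 <= x /\ a = x) \/ (x < 0 /\ a = -x)) by (unfold a; destruct (Rcase_abs x); [right; rewrite Rabs_left | left; rewrite Rabs_right]; lra).
  clearbody a b.
  assert (H1 : 0 <= 1 + x + y) by lra.
  assert (H2 : 0 <= 1 - a - b) by lra.
  pose proof (sqrt_sqrt _ H1) as Es. pose proof (sqrt_sqrt _ H2) as Et.
  pose proof (sqrt_pos (1+x+y)) as Ps. pose proof (sqrt_pos (1-a-b)) as Pt.
  set (s := sqrt (1+x+y)) in *. set (t := sqrt (1-a-b)) in *.
  assert (st : t <= s) by nra.
  assert (tb : t <= 1 - a/2) by nra.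
  apply Rabs_le; destruct Ex as [[E1 E2]|[E1 E2]]; split.
  - assert (s + t <= 2) by nra. lra.
  - assert (a + t <= s) by nra. lra.
  - assert (s + t <= 2 - a) by nra. lra.
  - lra.
Qed.
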